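(* Let $\Gamma=(Q,A,E,(\delta_e)_{e\in E})$ be an MEMDP, $q\in Q$, and $W$ a parity objective. Then $$\sup_{\tau\in\mathcal D(\mathrm{Strat}(Q,A))}\mathrm{val}^{\mathrm{uni}}_q(\Gamma,\tau,W)=\mathrm{val}^{\mathrm{uni}}_q(\Gamma,W).$$
   Context: $\mathcal D(X)$ is the set of distributions on $X$ with countable support. An MDP $G=(Q,A,\delta)$ has finite non-empty $Q,A$ and $\delta:Q\times A\to\mathcal D(Q)$; strategies are maps $\sigma:Q\cdot(A\cdot Q)^*\to\mathcal D(A)$, $\mathrm{Strat}(Q,A)$ is their set, and $\mathbb P^\sigma_q[G,\cdot]$ is the induced probability measure on infinite runs from $q$ (infinite state sequences measured by projection). A mixed strategy is $\tau\in\mathcal D(\mathrm{Strat}(Q,A))$ (countable support), with $\mathbb P^\tau_q[G,\cdot]:=\sum_\sigma\tau(\sigma)\mathbb P^\sigma_q[G,\cdot]$. A parity objective given by $f:Q\to\mathbb N$ is the set of infinite state sequences whose maximal label seen infinitely often is even. An MEMDP is $\Gamma=(Q,A,E,(\delta_e)_{e\in E})$ with $E$ finite non-empty and each $\Gamma[e]=(Q,A,\delta_e)$ an MDP. $\mathrm{val}^{\mathrm{uni}}_q(\Gamma,\tau,W)=\min_{e\in E}\mathbb P^\tau_q[\Gamma[e],W]$ and $\mathrm{val}^{\mathrm{uni}}_q(\Gamma,W)=\sup_{\sigma\in\mathrm{Strat}(Q,A)}\min_{e\in E}\mathbb P^\sigma_q[\Gamma[e],W]$. *)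

(* Defs.v *)
From HB Require Import structures.
From mathcomp Require Import all_boot all_order all_algebra.
From mathcomp Require Import all_classical all_reals all_analysis.

Set Implicit Arguments.
Unset Strict Implicit.
Unset Printing Implicit Defensive.

Import Order.TTheory GRing.Theory Num.Theory.
Local Open Scope classical_set_scope.
Local Open Scope ring_scope.

(* A distribution on a finite type (countable support is automatic). *)
Definition dist_on (R : realType) (T : finType) (d : T -> R) : Prop :=
  (forall t, 0 <= d t) /\ \sum_(t : T) d t = 1.

(* A transition function delta : Q x A -> D(Q), written curried:
   delta q a q' = probability of moving to q' when playing a in q. *)
Definition is_mdp (R : realType) (Q A : finType) (delta : Q -> A -> Q -> R)
  : Prop := forall q a, dist_on (delta q a).

(* Histories Q.(A.Q)^* : an initial state and a list of (action, state). *)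
Definition hist (Q A : finType) : Type := (Q * seq (A * Q))%type.

Definition hlast (Q A : finType) (h : hist Q A) : Q := last h.1 (map snd h.2).

(* A (behavioural) strategy sigma : Q.(A.Q)^* -> D(A). Raw functions are
   of type [strat], [is_strategy] says each value is a distribution on A. *)
Definition strat (R : realType) (Q A : finType) : Type := hist Q A -> A -> R.

Definition is_strategy (R : realType) (Q A : finType) (sigma : strat R Q A)
  : Prop := forall h, dist_on (sigma h).

(* Probability that, continuing from history h, the next states are
   exactly the list [rest] (actions are summed out). *)
Fixpoint path_prob (R : realType) (Q A : finType) (delta : Q -> A -> Q -> R)
    (sigma : strat R Q A) (h : hist Q A) (rest : seq Q) : R :=
  match rest with
  | [::] => 1
  | q' :: rest' =>
      \sum_(a : A) sigma h a * delta (hlast h) a q' *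
                   path_prob delta sigma (h.1, rcons h.2 (a, q')) rest'
  end.

Definition prefix_prob (R : realType) (Q A : finType) (delta : Q -> A -> Q -> R)
    (sigma : strat R Q A) (q : Q) (p : seq Q) : R :=
  match p with
  | [::] => 1
  | q0 :: rest => (q0 == q)%:R * path_prob delta sigma (q0, [::]) rest
  end.

(* The type of infinite state sequences; the state q only serves to
   make the type pointed (required by the generated sigma-algebra). *)
Definition run (Q : finType) (q : Q) : Type := nat -> Q.

Section run_instances.
Variables (Q : finType) (q : Q).
HB.instance Definition _ := Choice.on (@run Q q).
HB.instance Definition _ := isPointed.Build (@run Q q) (fun _ => q).
End run_instances.

Definition cyl (Q : finType) (q : Q) (p : seq Q) : set (@run Q q) :=
  [set w | forall i, (i < size p)%N -> w i = nth q p i].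
Arguments cyl {Q} q p.

Definition cylinders (Q : finType) (q : Q) : set (set (@run Q q)) :=
  range (@cyl Q q).
Arguments cylinders {Q} q.

Definition runs (Q : finType) (q : Q) := g_sigma_algebraType (cylinders q).

(* P is the probability measure P^sigma_q[G, .] induced by sigma in the MDP
   with transitions delta: it is the (unique) probability measure on the
   cylinder sigma-algebra giving each cylinder its prefix probability. *)
Definition is_induced (R : realType) (Q A : finType) (delta : Q -> A -> Q -> R)
    (sigma : strat R Q A) (q : Q) (P : probability (runs q) R) : Prop :=
  forall p : seq Q, P (cyl q p) = (prefix_prob delta sigma q p)%:E.
Arguments is_induced {R Q A} delta sigma q P.

Definition inf_often (Q : finType) (w : nat -> Q) (x : Q) : Prop :=
  forall N, exists2 n, (N <= n)%N & w n = x.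

Definition parity (Q : finType) (q : Q) (f : Q -> nat) : set (@run Q q) :=
  [set w | exists x, [/\ inf_often w x, ~~ odd (f x) &
                         forall y, inf_often w y -> (f y <= f x)%N]].
Arguments parity {Q} q f.

Definition supp (R : realType) (Q A : finType) (tau : strat R Q A -> R)
  : set (strat R Q A) := [set sigma | tau sigma != 0].

Definition is_mixed (R : realType) (Q A : finType) (tau : strat R Q A -> R)
  : Prop :=
  [/\ forall sigma, 0 <= tau sigma,
      supp tau `<=` [set sigma | is_strategy sigma],
      countable (supp tau) &
      (\esum_(sigma in supp tau) (tau sigma)%:E = 1)%E].

Definition mixed_prob (R : realType) (Q A : finType) (q : Q)
    (P : strat R Q A -> probability (runs q) R) (tau : strat R Q A -> R)
    (W : set (@run Q q)) : \bar R :=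
  (\esum_(sigma in supp tau) (tau sigma)%:E * P sigma W)%E.

(* Main.v *)
Require Import Defs.
From HB Require Import structures.
From mathcomp Require Import all_boot all_order all_algebra.
From mathcomp Require Import all_classical all_reals all_analysis.
From mathcomp Require Import ring lra.
Import Order.TTheory GRing.Theory Num.Theory.
Local Open Scope classical_set_scope.
Local Open Scope ring_scope.

Module PA.
Local Open Scope classical_set_scope.
Local Open Scope ring_scope.

Local Open Scope ereal_scope.
Lemma esumZl (R : realType) (T : choiceType) (I : set T) (a : T -> \bar R) (c : R) :
  (0 <= c)%R -> (forall i, I i -> 0 <= a i) ->
  \esum_(i in I) (c%:E * a i) = c%:E * \esum_(i in I) a i.
Proof.
move=> c0 a0; rewrite /esum -ereal_supZl//; last first.
  apply/set0P; exists 0; exists set0; [exact: fsets_set0| by rewrite fsbig_set0].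
congr ereal_sup; apply/seteqP; split => x /=.
  move=> [X [finX XI] <-]; exists (\sum_(i \in X) a i); first by exists X.
  rewrite !fsbig_finite//= !big_seq ge0_sume_distrr// => i.
  by rewrite in_fset_set// inE => /XI/a0.
move=> [y [X [finX XI] <-] <-]; exists X => //.
rewrite !fsbig_finite//= !big_seq ge0_sume_distrr// => i.
by rewrite in_fset_set// inE => /XI/a0.
Qed.

End PA.
Import PA.

Module PB.
Local Open Scope classical_set_scope.
Local Open Scope ring_scope.
Local Open Scope ereal_scope.

Section mix.
Context d (T : measurableType d) (R : realType) (I : choiceType) (S : set I)
  (w : I -> R) (m : I -> probability T R).

Let wp i := Num.max (w i) 0%R.
Let w0 i : (0 <= wp i)%R. Proof. by rewrite /wp le_max lexx orbT. Qed.
Definition mixm (X : set T) : \bar R := \esum_(i in S) (Num.max (w i) 0%R)%:E * m i X.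

Let mixm0 : mixm set0 = 0.
Proof. by rewrite /mixm esum1// => i _; rewrite measure0 mule0. Qed.

Let mixm_ge0 X : 0 <= mixm X.
Proof. by apply: esum_ge0 => i _; rewrite mule_ge0// lee_fin le_max lexx orbT. Qed.

Let mixm_sa : semi_sigma_additive mixm.
Proof.
move=> F mF tF mUF.
have -> : mixm (\bigcup_n F n) = \sum_(n <oo) mixm (F n).
  rewrite /mixm.
  transitivity (\esum_(i in S) \sum_(n <oo) (Num.max (w i) 0%R)%:E * m i (F n)).
    by apply: eq_esum => i _; rewrite nneseriesZl// measure_semi_bigcup.
  transitivity (\esum_(i in S) \esum_(n in [set: nat]) (Num.max (w i) 0%R)%:E * m i (F n)).
    by apply: eq_esum => i _; rewrite nneseries_esumT// => n; rewrite mule_ge0// lee_fin le_max lexx orbT.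
  rewrite nneseries_esumT; last by move=> n; apply: esum_ge0 => i _; rewrite mule_ge0// lee_fin le_max lexx orbT.
  rewrite esum_esum; last by move=> i j _ _; rewrite mule_ge0// lee_fin le_max lexx orbT.
  rewrite (@esum_esum _ _ _ setT (fun _ => S) (fun n i => (Num.max (w i) 0%R)%:E * m i (F n))); last by move=> i j _ _; rewrite mule_ge0// lee_fin le_max lexx orbT.
  rewrite (reindex_esum (S `*`` (fun _ => setT)) _ (fun x => (x.2, x.1)))//; split=> //=.
  - by move=> [i j] [/=].
  - by move=> [i1 i2] [j1 j2] /= _ _ [] -> ->.
  - by move=> [i1 i2] [Pi1 Qi2] /=; exists (i2, i1).
apply: is_cvg_ereal_nneg_natsum => n _; exact: mixm_ge0.
Qed.

HB.instance Definition _ := isMeasure.Build _ _ _ mixm mixm0 mixm_ge0 mixm_sa.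

End mix.

End PB.
Import PB.

Module PC.
Local Open Scope classical_set_scope.
Local Open Scope ring_scope.

Section meas.
Context (Q : finType) (q : Q).

Lemma cyl_meas (p : seq Q) : @measurable _ (runs q) (cyl q p).
Proof. by apply: sub_sigma_algebra; exists p. Qed.

Definition evk (n : nat) (x : Q) (k : nat) : set (runs q) :=
  if @unpickle (seq Q) k is Some p then
    if (size p == n.+1) && (nth q p n == x) then cyl q p else set0
  else set0.

Lemma ev_meas n x : @measurable _ (runs q) [set w : runs q | w n = x].
Proof.
have -> : [set w : runs q | w n = x] = \bigcup_k evk n x k.
  apply/seteqP; split => w /=.
    move=> wn; set p := [seq w i | i <- iota 0 n.+1].
    have sp : size p = n.+1 by rewrite size_map size_iota.
    have np i : (i < n.+1)%N -> nth q p i = w i.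
      by move=> ilt; rewrite (nth_map 0%N) ?size_iota// nth_iota.
    exists (pickle p) => //.
    rewrite /evk pickleK sp eqxx np // wn eqxx /=.
    by move=> i; rewrite sp => /np ->.
  move=> [k _]; rewrite /evk; case: unpickle => [p|//].
  case: ifP => [/andP[/eqP sp /eqP <-]|//] wp.
  by apply: wp; rewrite sp.
apply: bigcupT_measurable => k; rewrite /evk; case: unpickle => [p|//].
by case: ifP => _; [exact: cyl_meas|exact: measurable0].
Qed.

Lemma io_meas x : @measurable _ (runs q) [set w : runs q | inf_often w x].
Proof.
have -> : [set w : runs q | inf_often w x] =
    \bigcap_N \bigcup_(n in [set n | (N <= n)%N]) [set w : runs q | w n = x].
  apply/seteqP; split => w /=.
    by move=> io N _; have [n Nn wn] := io N; exists n.
  by move=> h N; have [n Nn wn] := h N I; exists n.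
apply: bigcapT_measurable => N; apply: bigcup_measurable => n _.
exact: ev_meas.
Qed.

Lemma parity_meas f : @measurable _ (runs q) (parity q f).
Proof.
have -> : parity q f = \bigcup_(x in [set x | ~~ odd (f x)])
    ([set w : runs q | inf_often w x] `&`
     \bigcap_(y in [set y | (f x < f y)%N]) ~` [set w : runs q | inf_often w y]).
  apply/seteqP; split => w /=.
    move=> [x [iox ev mx]]; exists x => //; split => // y /= fxy iy.
    by move: (mx y iy); rewrite leqNgt fxy.
  move=> [x ev [iox hy]]; exists x; split => // y iy.
  rewrite leqNgt; apply/negP => fxy; exact: (hy y fxy iy).
apply: fin_bigcup_measurable; first exact: finite_finset.
move=> x _; apply: measurableI; first exact: io_meas.
apply: fin_bigcap_measurable; first exact: finite_finset.
by move=> y _; apply: measurableC; exact: io_meas.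
Qed.

End meas.

End PC.
Import PC.

Module PD.
Local Open Scope classical_set_scope.
Local Open Scope ring_scope.

Section uniq.
Context (Q : finType) (q : Q) (R : realType).

Definition G0 : set (set (runs q)) := cylinders q `|` [set set0].

Lemma cylI p p' : G0 (cyl q p `&` cyl q p').
Proof.
wlog sz : p p' / (size p <= size p')%N.
  move=> H; case: (leqP (size p) (size p')) => s; first exact: H.
  by rewrite setIC; apply: H; exact: ltnW.
case: (boolP [forall i : 'I_(size p), nth q p i == nth q p' i]) => [/forallP h|].
  left; exists p' => //; apply/seteqP; split => w /=.
    move=> wp' ; split => // i ip; rewrite (eqP (h (Ordinal ip))) /=.
    by apply: wp'; exact: leq_trans sz.
  by case.
move=> /forallPn[i /eqP ne]; right; apply/seteqP; split => w //= [wp wp'].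
apply: ne; rewrite -wp // -wp' //; exact: leq_trans (ltn_ord i) sz.
Qed.

Lemma G0I : setI_closed G0.
Proof.
move=> A B [[p _ <-]|->] [[p' _ <-]|->]; rewrite ?set0I ?setI0; try by right.
exact: cylI.
Qed.

Lemma G0E : @measurable _ (runs q) = <<s G0 >>.
Proof.
apply/seteqP; split.
  by apply: sub_sigma_algebra2 => A cA; left.
apply: smallest_sub; first exact: sigma_algebra_measurable.
move=> A [[p _ <-]|->]; [exact: cyl_meas|exact: measurable0].
Qed.

Lemma cyl_nil : cyl q [::] = setT.
Proof. by apply/seteqP; split => w //= _ i. Qed.

Lemma uniq_cyl (m1 m2 : {measure set (runs q) -> \bar R}) :
  (m1 setT < +oo)%E ->
  (forall p, m1 (cyl q p) = m2 (cyl q p)) ->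
  forall A, @measurable _ (runs q) A -> m1 A = m2 A.
Proof.
move=> fin e A mA.
apply: (measure_unique G0 (fun=> cyl q [::])) => //.
- exact: G0E.
- exact: G0I.
- by move=> _; left; exists [::].
- by apply/seteqP; split => w // _; exists 0%N.
- by move=> B [[p _ <-]|->]; rewrite ?measure0.
- by move=> _; rewrite cyl_nil.
Qed.
End uniq.

End PD.
Import PD.

Module PE.
Local Open Scope classical_set_scope.
Local Open Scope ring_scope.

Section kuhn.
Context (R : realType) (Q A : finType).

Fixpoint swa (s : strat R Q A) (h : hist Q A) (l : seq (A * Q)) : R :=
  match l with
  | [::] => 1
  | x :: l' => s h x.1 * swa s (h.1, rcons h.2 x) l'
  end.

Definition sw s (h : hist Q A) := swa s (h.1, [::]) h.2.

Lemma swa_rcons s h l x :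
  swa s h (rcons l x) = swa s h l * s (h.1, h.2 ++ l) x.1.
Proof.
elim: l h => [|y l IH] [q0 l0] /=; first by rewrite cats0 mulr1 mul1r.
by rewrite IH /= cat_rcons mulrA.
Qed.

Lemma sw_ext s h x : sw s (h.1, rcons h.2 x) = sw s h * s h x.1.
Proof. by case: h => q0 l0; rewrite /sw /= swa_rcons. Qed.

Lemma dist_le1 (T : finType) (d : T -> R) t : dist_on d -> d t <= 1.
Proof.
move=> [d0 d1]; rewrite -d1 (bigD1 t)//= lerDl; exact: sumr_ge0.
Qed.

Lemma swa_bnd s h l : is_strategy s -> 0 <= swa s h l <= 1.
Proof.
move=> hs; elim: l h => [|x l IH] h /=; first by rewrite ler01 lexx.
have /andP[a0 a1] := IH (h.1, rcons h.2 x).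
have b0 := (hs h).1 x.1; have b1 := @dist_le1 _ _ x.1 (hs h).
rewrite mulr_ge0//=; rewrite -[1]mulr1; exact: ler_pM.
Qed.

Lemma sw_bnd s h : is_strategy s -> 0 <= sw s h <= 1.
Proof. exact: swa_bnd. Qed.

Lemma pp_ge0 (delta : Q -> A -> Q -> R) s h rest :
  (forall q a q', 0 <= delta q a q') -> (forall h a, 0 <= s h a) ->
  0 <= path_prob delta s h rest.
Proof.
move=> d0 s0; elim: rest h => [|x rest IH] h /=; first exact: ler01.
by apply: sumr_ge0 => a _; rewrite !mulr_ge0.
Qed.

Variable tau : strat R Q A -> R.
Hypothesis htau : is_mixed tau.
Let S := supp tau.

Let tau0 s : 0 <= tau s. Proof. by case: htau. Qed.
Let Sstrat s : S s -> is_strategy s. Proof. by case: htau => _ h _ _; exact: h. Qed.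
Let tau1 : (\esum_(s in S) (tau s)%:E = 1)%E. Proof. by case: htau. Qed.

Definition Dn h : \bar R := \esum_(s in S) (tau s * sw s h)%:E.
Definition Nm h a : \bar R := \esum_(s in S) (tau s * sw s h * s h a)%:E.

Lemma Dn_ge0 h : (0 <= Dn h)%E.
Proof.
apply: esum_ge0 => s Ss; rewrite lee_fin mulr_ge0//.
by case/andP: (sw_bnd s h (Sstrat s Ss)).
Qed.

Lemma Dn_le1 h : (Dn h <= 1)%E.
Proof.
rewrite -tau1; apply: le_esum => s Ss; rewrite lee_fin.
rewrite -[leRHS]mulr1 ler_wpM2l//; by case/andP: (sw_bnd s h (Sstrat s Ss)).
Qed.

Lemma Nm_ge0 h a : (0 <= Nm h a)%E.
Proof.
apply: esum_ge0 => s Ss; rewrite lee_fin !mulr_ge0//.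
  by case/andP: (sw_bnd s h (Sstrat s Ss)).
exact: (Sstrat s Ss h).1.
Qed.

Lemma Nm_le h a : (Nm h a <= Dn h)%E.
Proof.
apply: le_esum => s Ss; rewrite lee_fin.
rewrite -[leRHS]mulr1 ler_wpM2l//; last exact: (@dist_le1 _ _ a (Sstrat s Ss h)).
by rewrite mulr_ge0//; case/andP: (sw_bnd s h (Sstrat s Ss)).
Qed.

Lemma Dn_fin h : Dn h \is a fin_num.
Proof. by rewrite ge0_fin_numE ?Dn_ge0// (le_lt_trans (Dn_le1 h)) ?ltry. Qed.

Lemma Nm_fin h a : Nm h a \is a fin_num.
Proof. by rewrite ge0_fin_numE ?Nm_ge0// (le_lt_trans (Nm_le h a)) ?(le_lt_trans (Dn_le1 h)) ?ltry. Qed.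

Lemma sum_Nm h : (\sum_(a : A) Nm h a = Dn h)%E.
Proof.
rewrite /Nm -esum_sum; last first.
  move=> s a Ss _; rewrite lee_fin !mulr_ge0//; last exact: (Sstrat s Ss h).1.
  by case/andP: (sw_bnd s h (Sstrat s Ss)).
apply: eq_esum => s Ss; rewrite sumEFin; congr EFin.
by rewrite -mulr_sumr (Sstrat s Ss h).2 mulr1.
Qed.

Definition sstar : strat R Q A := fun h a =>
  if fine (Dn h) == 0 then #|A|%:R^-1 else fine (Nm h a) / fine (Dn h).

Lemma Dn_sstar h a : (Dn h * (sstar h a)%:E = Nm h a)%E.
Proof.
rewrite /sstar; case: ifPn => [/eqP D0|D0].
  have DE : Dn h = 0%E by rewrite -[Dn h]fineK ?Dn_fin // D0.
  by rewrite DE mul0e; apply/eqP; rewrite eq_le Nm_ge0 -DE Nm_le.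
have DE : Dn h = (fine (Dn h))%:E by rewrite fineK //; exact: Dn_fin.
rewrite [X in (X * _)%E]DE -EFinM mulrC divfK// fineK//; exact: Nm_fin.
Qed.

Lemma fine_Dn_ge0 h : 0 <= fine (Dn h).
Proof. by apply: fine_ge0; exact: Dn_ge0. Qed.

Hypothesis hA : (0 < #|A|)%N.

Lemma sstar_strat : is_strategy sstar.
Proof.
move=> h; rewrite /sstar; case: (eqVneq (fine (Dn h)) 0) => D0; split;
  try move=> t; rewrite ?D0 ?eqxx ?(negPf D0).
- by rewrite invr_ge0.
- by rewrite sumr_const -[X in X = 1]mulr_natr mulVf // pnatr_eq0 -lt0n.
- rewrite divr_ge0 ?fine_Dn_ge0//; apply: fine_ge0; exact: Nm_ge0.
- have e : (\sum_a fine (Nm h a))%:E = Dn h.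
    rewrite -sumEFin -sum_Nm; apply: eq_bigr => a _; rewrite fineK //.
    exact: Nm_fin.
  by move: D0; rewrite -mulr_suml -e /= => D0; rewrite divff.
Qed.

Variable delta : Q -> A -> Q -> R.
Hypothesis d0 : forall q a q', 0 <= delta q a q'.

Let sstar0 h a : 0 <= sstar h a. Proof. exact: (sstar_strat h).1. Qed.

Let term_ge0 s h rest : S s -> 0 <= tau s * sw s h * path_prob delta s h rest.
Proof.
move=> Ss; rewrite !mulr_ge0 //; first by case/andP: (sw_bnd s h (Sstrat s Ss)).
by apply: pp_ge0 => // h0 a0; exact: (Sstrat s Ss h0).1.
Qed.

Lemma kuhn_path rest h :
  (Dn h * (path_prob delta sstar h rest)%:E =
   \esum_(s in S) (tau s * sw s h * path_prob delta s h rest)%:E)%E.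
Proof.
elim: rest h => [|q' rest IH] h /=.
  by rewrite mule1; apply: eq_esum => s _; rewrite mulr1.
pose h' a := (h.1, rcons h.2 (a, q')).
transitivity (\sum_(a : A) (delta (hlast h) a q')%:E *
   \esum_(s in S) (tau s * sw s (h' a) * path_prob delta s (h' a) rest)%:E)%E.
  rewrite -sumEFin ge0_sume_distrr; last first.
    move=> a _; rewrite lee_fin !mulr_ge0 //.
    by apply: pp_ge0 => // ? ?; exact: sstar0.
  apply: eq_bigr => a _.
  rewrite -IH !EFinM !muleA Dn_sstar.
  have -> : Nm h a = Dn (h' a).
    by apply: eq_esum => s _; rewrite /h' sw_ext /= mulrA.
  by rewrite (muleC (Dn _)) -muleA.
transitivity (\sum_(a : A) \esum_(s in S)
   (delta (hlast h) a q' * (tau s * sw s (h' a) * path_prob delta s (h' a) rest))%:E)%E.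
  apply: eq_bigr => a _; rewrite -esumZl //; last first.
    by move=> s Ss; rewrite lee_fin; exact: term_ge0.
rewrite -esum_sum; last first.
  by move=> s a Ss _; rewrite lee_fin mulr_ge0 //; exact: term_ge0.
apply: eq_esum => s Ss; rewrite sumEFin; congr EFin.
rewrite mulr_sumr; apply: eq_bigr => a _; rewrite /h' sw_ext /=.
ring.
Qed.

Lemma kuhn_prefix q p :
  (prefix_prob delta sstar q p)%:E =
  \esum_(s in S) (tau s * prefix_prob delta s q p)%:E.
Proof.
case: p => [|q0 rest] /=.
  by rewrite -tau1; apply: eq_esum => s _; rewrite mulr1.
have D1 : Dn (q0, [::]) = 1%E.
  by rewrite -tau1; apply: eq_esum => s _; rewrite /sw /= mulr1.
have := kuhn_path rest (q0, [::]); rewrite D1 mul1e => kp.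
rewrite EFinM kp -esumZl //; last first.
  by move=> s Ss; rewrite lee_fin; exact: term_ge0.
by apply: eq_esum => s _; rewrite -EFinM /sw /= mulr1 mulrCA.
Qed.
End kuhn.

End PE.
Import PE.

Module PF.
Local Open Scope classical_set_scope.
Local Open Scope ring_scope.

Lemma mixed_pure (R : realType) (Q A E : finType)
  (hA : (0 < #|A|)%N)
  (delta : E -> Q -> A -> Q -> R) (hdelta : forall e, is_mdp (delta e))
  (q : Q) (P : E -> strat R Q A -> probability (runs q) R)
  (hP : forall e sigma, is_strategy sigma -> is_induced (delta e) sigma q (P e sigma))
  (tau : strat R Q A -> R) (htau : is_mixed tau) (W : set (runs q))
  (mW : @measurable _ (runs q) W) :
  exists2 s, is_strategy s & forall e, mixed_prob (P e) tau W = P e s W.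
Proof.
have tau0 : forall s, 0 <= tau s by case: htau.
have Sstrat : forall s, supp tau s -> is_strategy s by case: htau.
exists (sstar _ _ _ tau); first exact: (sstar_strat _ _ _ _ htau hA).
move=> e.
have d0 : forall q a q', 0 <= delta e q a q' by move=> q0 a q'; exact: ((hdelta e q0 a).1 q').
have -> : mixed_prob (P e) tau W = @mixm _ _ R _ (supp tau) tau (P e) W.
  apply: eq_esum => s _; congr (_ * _)%E; congr EFin.
  by apply/esym/max_idPl; exact: tau0.
apply/esym; apply: (uniq_cyl _ _ _ (P e (sstar _ _ _ tau))) => //.
  by apply: (le_lt_trans (probability_le1 (P e (sstar _ _ _ tau)) measurableT)); rewrite ltry.
move=> p.
transitivity ((prefix_prob (delta e) (sstar _ _ _ tau) q p)%:E).
  exact: (hP e _ (sstar_strat _ _ _ _ htau hA) p).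
rewrite (kuhn_prefix _ _ _ _ htau hA _ d0); symmetry.
apply: eq_esum => s Ss.
have -> : P e s (cyl q p) = (prefix_prob (delta e) s q p)%:E.
  exact: (hP e _ (Sstrat s Ss) p).
rewrite -EFinM; congr EFin; congr (_ * _).
by apply/max_idPl; exact: tau0.
Qed.

End PF.
Import PF.

Theorem mainTheorem7 (R : realType) (Q A E : finType)
  (hA : (0 < #|A|)%N) (hE : (0 < #|E|)%N)
  (delta : E -> Q -> A -> Q -> R) (hdelta : forall e, is_mdp (delta e))
  (q : Q) (f : Q -> nat)
  (P : E -> strat R Q A -> probability (runs q) R)
  (hP : forall e sigma, is_strategy sigma -> is_induced (delta e) sigma q (P e sigma)) :
  ereal_sup [set \big[Order.min/+oo%E]_(e : E) mixed_prob (P e) tau (parity q f)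
            | tau in [set tau | is_mixed tau]]
  = ereal_sup [set \big[Order.min/+oo%E]_(e : E) P e sigma (parity q f)
            | sigma in [set sigma | is_strategy sigma]].
Proof.
apply/eqP; rewrite eq_le; apply/andP; split.
  apply: ge_ereal_sup => _ [tau htau <-].
  have [s hs es] := mixed_pure _ _ _ _ hA _ hdelta _ _ hP _ htau _ (parity_meas _ q f).
  apply: ereal_sup_ubound; exists s => //.
  by apply: eq_bigr => e _; rewrite es.
apply: ge_ereal_sup => _ [s hs <-].
apply: ereal_sup_ubound.
pose tau : strat R Q A -> R := fun t => if `[< t = s >] then 1 else 0.
have suppE : supp tau = [set s].
  apply/seteqP; split => t /=; rewrite /supp /tau /=.
    by case: ifPn => [/asboolP //|]; rewrite eqxx.
  by move=> ->; rewrite asboolT // oner_neq0.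
exists tau.
  split.
  - by move=> t; rewrite /tau; case: ifPn.
  - by rewrite suppE => t ->.
  - by rewrite suppE; apply: finite_set_countable; exact: finite_set1.
  - by rewrite suppE esum_set1 /tau ?asboolT // lee_fin.
apply: eq_bigr => e _; rewrite /mixed_prob suppE esum_set1 /tau ?asboolT ?mul1e //.
Qed.
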